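(* Consider the following two-period durable goods model with a finite set $\mathcal{J}$ of single-product firms and common discount factor $\beta$. In period $t=1$ firm $j$ sells product $j$, quantity $q_{j1}$, which still works in period 2 with probability $\phi_j$ (its durability); in period $t=2$ firm $j$ sells a one-period product, quantity $q_{j2}$. Marginal costs are $c_{j1}(\phi_j)$ in period 1 and $c_{j2}$ in period 2. Consumer inventories are $\Psi_{j1}=0$, $\Psi_{j2}=\phi_j q_{j1}$; service demands are $Q_{jt}=q_{jt}+\Psi_{jt}$ (so $Q_{j1}=q_{j1}$ and $Q_{j2}=\phi_jq_{j1}+q_{j2}$). Service prices $P_{jt}$ satisfy $p_{j1}=P_{j1}+\beta\phi_jP_{j2}$ and $p_{j2}=P_{j2}$, where $p_{jt}$ are the product prices. Each $Q_{jt}$ is a function $Q_{jt}\bigl(\{\Psi_{kt}\}_{k},\{P_{kt}\}_{k},\{P_{k,t+\tau}\}_{k,\tau\neq0},\{\phi_k\}_k\bigr)$, and firm $j$'s profit can be written as $$V_j^F=\bigl(P_{j1}-c_{j1}(\phi_j)+\beta c_{j2}\phi_j\bigr)Q_{j1}+\beta\,(P_{j2}-c_{j2})\,Q_{j2}.$$ Assume: (i) $\frac{\partial Q_{jt}}{\partial \Psi_{kt}}\ge 0$ for all $j,k,t$ (dependence on consumer inventory); (ii) $Q_{jt}$ does not depend on the durabilities $\{\phi_k\}_{k\in\mathcal{J}}$ (no preference for durability per se); (iii) $Q_{jt}$ does not depend on service prices in other periods $\{P_{k,t+\tau}\}_{k\in\mathcal{J},\tau\ge1}$; and (iv) $\frac{\partial}{\partial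 \Psi_{j2}}\Bigl[\frac{\partial Q_{j2}}{\partial P_{j2}}\Bigr]\ge 0$. Suppose product $j$'s service prices $P_{j1},P_{j2}$ are exogenously given, and firm $j$ chooses its durability $\phi_j$ to maximize $V_j^F$. Then, holding $P_{j1}$ fixed, firm $j$ raises its product durability when $P_{j2}$ is higher, i.e. the profit-maximizing durability $\phi_j$ is increasing in $P_{j2}$.
   Context: This is a stylized two-period model used to interpret firms' incentives on product durability; all functions are assumed differentiable. The ''service price'' $P_{jt}$ corresponds to the rental price of the product, and $Q_{jt}$ is the total service demand (new purchases plus still-functioning units held by consumers). *)

(* Defs.v *)
From Stdlib Require Import Reals.
From Coquelicot Require Import Coquelicot.
Open Scope R_scope.

(* Reduced two-period model for firm j; all other firms' variables are held
   fixed and absorbed into the demand functions.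

   Q1 Psi1 P1 P2 phi : service demand Q_{j1} as a function of the consumer
                       inventory Psi_{j1}, the own service prices P_{j1}
                       (current) and P_{j2} (future), and durability phi_j.
   Q2 Psi2 P2 P1 phi : service demand Q_{j2} as a function of Psi_{j2},
                       P_{j2} (current), P_{j1} (past), and phi_j.

   Consumer inventories: Psi_{j1} = 0, Psi_{j2} = phi_j * q_{j1} = phi_j * Q_{j1}. *)

Definition Qj1 (Q1 : R -> R -> R -> R -> R) (P1 P2 phi : R) : R :=
  Q1 0 P1 P2 phi.

Definition Qj2 (Q1 Q2 : R -> R -> R -> R -> R) (P1 P2 phi : R) : R :=
  Q2 (phi * Qj1 Q1 P1 P2 phi) P2 P1 phi.

Definition VF (beta c2 : R) (c1 : R -> R) (Q1 Q2 : R -> R -> R -> R -> R)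
  (P1 P2 phi : R) : R :=
  (P1 - c1 phi + beta * c2 * phi) * Qj1 Q1 P1 P2 phi
  + beta * (P2 - c2) * Qj2 Q1 Q2 P1 P2 phi.

(* x is a profit-maximizing durability (durability is a probability in [0,1]). *)
Definition is_argmax01 (f : R -> R) (x : R) : Prop :=
  0 <= x <= 1 /\ forall y, 0 <= y <= 1 -> f y <= f x.

(* Main.v *)
Require Import Defs.
From Stdlib Require Import Reals Lra.
From Coquelicot Require Import Coquelicot.
Open Scope R_scope.

Lemma mono_of_deriv (f : R -> R) :
  (forall x, ex_derive f x) -> (forall x, 0 <= Derive f x) ->
  forall x y, x <= y -> f x <= f y.
Proof.
  intros Hd Hp x y Hxy.
  destruct (MVT_gen f x y (Derive f)) as [c [_ Hc]].
  - intros z _. apply Derive_correct, Hd.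
  - intros z _. apply continuity_pt_filterlim. apply (ex_derive_continuous (K:=R_AbsRing) (V:=R_NormedModule)), Hd.
  - assert (0 <= Derive f c * (y - x)) by (apply Rmult_le_pos; [apply Hp|lra]). lra.
Qed.

Theorem proposition2
  (beta c2 : R) (c1 : R -> R) (Q1 Q2 : R -> R -> R -> R -> R)
  (Hbeta : 0 < beta <= 1)
  (* all functions differentiable *)
  (Hc1 : forall x, ex_derive c1 x)
  (HQ1d : forall s p1 p2 f, ex_derive (fun x => Q1 x p1 p2 f) s)
  (HQ2d : forall s p2 p1 f, ex_derive (fun x => Q2 x p2 p1 f) s)
  (HQ2dP : forall s p2 p1 f, ex_derive (fun p => Q2 s p p1 f) p2)
  (HQ2dPd : forall s p2 p1 f,
      ex_derive (fun x => Derive (fun p => Q2 x p p1 f) p2) s)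
  (* quantities are nonnegative *)
  (HQ1pos : forall s p1 p2 f, 0 <= Q1 s p1 p2 f)
  (* (i) dependence on consumer inventory *)
  (Hi1 : forall s p1 p2 f, 0 <= Derive (fun x => Q1 x p1 p2 f) s)
  (Hi2 : forall s p2 p1 f, 0 <= Derive (fun x => Q2 x p2 p1 f) s)
  (* (ii) no preference for durability per se *)
  (Hii1 : forall s p1 p2 f f', Q1 s p1 p2 f = Q1 s p1 p2 f')
  (Hii2 : forall s p2 p1 f f', Q2 s p2 p1 f = Q2 s p2 p1 f')
  (* (iii) no dependence on future service prices *)
  (Hiii : forall s p1 p2 p2' f, Q1 s p1 p2 f = Q1 s p1 p2' f)
  (* (iv) cross-derivative condition *)
  (Hiv : forall s p2 p1 f,
      0 <= Derive (fun x => Derive (fun p => Q2 x p p1 f) p2) s)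
  (* exogenous service prices: P1 fixed, P2 <= P2', markup nonnegative *)
  (P1 P2 P2' : R) (HP2c : c2 <= P2) (HP2 : P2 <= P2')
  (phi phi' : R)
  (Hphi : is_argmax01 (VF beta c2 c1 Q1 Q2 P1 P2) phi)
  (Hphi' : is_argmax01 (VF beta c2 c1 Q1 Q2 P1 P2') phi') :
  is_argmax01 (VF beta c2 c1 Q1 Q2 P1 P2') (Rmax phi phi') /\
  is_argmax01 (VF beta c2 c1 Q1 Q2 P1 P2) (Rmin phi phi').
Proof.
  set (A := Q1 0 P1 P2 0).
  assert (HA : 0 <= A) by apply HQ1pos.
  set (g := fun s p => Q2 s p P1 0).
  assert (HV : forall p f, VF beta c2 c1 Q1 Q2 P1 p f =
     (P1 - c1 f + beta * c2 * f) * A + beta * (p - c2) * g (f * A) p).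
  { intros p f. unfold VF, Qj2, Qj1, g, A.
    rewrite (Hii1 0 P1 p f 0), (Hiii 0 P1 p P2 0), (Hii2 _ p P1 f 0). reflexivity. }
  assert (Hgs : forall p s1 s2, s1 <= s2 -> g s1 p <= g s2 p).
  { intros p. unfold g. apply mono_of_deriv; intros; [apply HQ2d|apply Hi2]. }
  assert (Hgp : forall p s1 s2, s1 <= s2 ->
     Derive (fun q => Q2 s1 q P1 0) p <= Derive (fun q => Q2 s2 q P1 0) p).
  { intros p. apply (mono_of_deriv (fun x => Derive (fun q => Q2 x q P1 0) p));
    intros; [apply HQ2dPd|apply Hiv]. }
  assert (Hh : forall s1 s2, s1 <= s2 ->
     g s1 P2' - g s1 P2 <= g s2 P2' - g s2 P2).
  { intros s1 s2 Hs.
    assert (K : (fun p => g s2 p - g s1 p) P2 <= (fun p => g s2 p - g s1 p) P2').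
    { apply (mono_of_deriv (fun p => g s2 p - g s1 p)); auto; intros p.
      - apply (ex_derive_minus (fun p => g s2 p) (fun p => g s1 p)); apply HQ2dP.
      - rewrite (Derive_minus (fun p => g s2 p) (fun p => g s1 p)) by apply HQ2dP. unfold g.
        specialize (Hgp p s1 s2 Hs). simpl in *. lra. }
    simpl in K. lra. }
  assert (HD : forall f f', f' <= f ->
     VF beta c2 c1 Q1 Q2 P1 P2' f' - VF beta c2 c1 Q1 Q2 P1 P2 f' <=
     VF beta c2 c1 Q1 Q2 P1 P2' f - VF beta c2 c1 Q1 Q2 P1 P2 f).
  { intros f f' Hf. rewrite !HV.
    assert (HfA : f' * A <= f * A) by (apply Rmult_le_compat_r; lra).
    specialize (Hgs P2' _ _ HfA). specialize (Hh _ _ HfA).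
    assert (E : forall x, beta * (P2' - c2) * g x P2' - beta * (P2 - c2) * g x P2
       = beta * ((P2' - P2) * g x P2' + (P2 - c2) * (g x P2' - g x P2))) by (intros; ring).
    assert (beta * ((P2' - P2) * g (f' * A) P2' + (P2 - c2) * (g (f' * A) P2' - g (f' * A) P2))
         <= beta * ((P2' - P2) * g (f * A) P2' + (P2 - c2) * (g (f * A) P2' - g (f * A) P2))).
    { apply Rmult_le_compat_l; [lra|]. apply Rplus_le_compat;
      apply Rmult_le_compat_l; lra. }
    rewrite <- !E in H. lra. }
  destruct Hphi as [Hr H1], Hphi' as [Hr' H2].
  destruct (Rle_dec phi phi') as [Hle|Hlt].
  - rewrite Rmax_right, Rmin_left by lra. split; split; auto.
  - rewrite Rmax_left, Rmin_right by lra.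
    specialize (HD phi phi' ltac:(lra)).
    pose proof (H1 phi' Hr') as G1. pose proof (H2 phi Hr) as G2.
    split; split; auto; intros y Hy.
    + specialize (H2 y Hy). lra.
    + specialize (H1 y Hy). lra.
Qed.
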